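(* Let $\mathcal{CT}$ be a theory of constraints, with set of atomic constraints $\mathcal C$, that is closed under negation and under existential quantification. Then for all finite sets $C,D\subseteq\mathcal C$ such that $C\cup D$ is consistent, there exist sets of constraints $E_1,\dots,E_r$ such that $\mathit{cs}(C,D)=\{E_1,\dots,E_r\}$ is a constraint split of $C$ and $D$.
   Context: $\mathcal{CT}$ is a first-order theory with equality (identity on its domain, including the Clark Equality Theory) whose atomic formulas form the set $\mathcal C$ of (atomic) constraints; $\mathcal{CT}\models\varphi$ means $\varphi$ is valid in $\mathcal{CT}$. A finite set $\{c_1,\dots,c_n\}$ of constraints (or the corresponding conjunction) is consistent if $\mathcal{CT}\models\exists(c_1\wedge\dots\wedge c_n)$; two conjunctions $e,e'$ are mutually exclusive if $\mathcal{CT}\models\neg\exists(e\wedge e')$. $\mathit{vars}(\cdot)$ is the set of variables; for a formula $B$ and set $V$ of variables, $\exists_{-V}B$ denotes $B$ existentially quantified over its free variables not in $V$; $\forall(\cdot)$, $\exists(\cdot)$ are universal and existential closures. $\mathcal{CT}$ is closed under negation if for every $c\in\mathcal C$ there exist $d_1,\dots,d_m\in\mathcal C$ with $\mathcal{CT}\models\forall(\neg c\leftrightarrow(d_1\vee\dots\vee d_m))$ and $\mathcal{CT}\models\neg\exists(d_i\wedge d_j)$ for all $i\ne j$. $\mathcal{CT}$ is closed under existential quantification if for every $\{c_1,\dots,c_m\}\subseteq\mathcal C$ and set $V$ of variables there exist constraints $d_1,\dots,d_n\in\mathcal C$ grouped as $d_1,\dots,d_i,\dots,d_j,\dots,d_n$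 such that $\mathcal{CT}\models\forall(\exists_{-V}(c_1\wedge\dots\wedge c_m)\leftrightarrow((d_1\wedge\dots\wedge d_i)\vee\dots\vee(d_j\wedge\dots\wedge d_n)))$ (i.e. a disjunction of conjunctions of constraints). Constraint split. For $C=\{c_1,\dots,c_m\}$ and $D=\{d_1,\dots,d_n\}$, a constraint split of $C$ and $D$ is a set $\mathit{cs}(C,D)=\{E_1,\dots,E_r\}$ of sets of constraints, with $e_i$ the conjunction of the constraints in $E_i$, such that: (1) $\mathcal{CT}\models\forall((\neg\exists_{-V}(c_1\wedge\dots\wedge c_m)\wedge d_1\wedge\dots\wedge d_n)\leftrightarrow(e_1\vee\dots\vee e_r))$ where $V=\mathit{vars}(C)\cap\mathit{vars}(D)$; (2) each $e_i$ is consistent; (3) $e_i$ and $e_j$ are mutually exclusive for $i\ne j$.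
   Formalization: $\mathcal{CT}$ is a single structure with nonempty domain, and $\mathcal{CT}\models\varphi$ means truth of $\varphi$ in that structure rather than validity in every structure satisfying $\mathcal{CT}$, so $\mathcal{CT}$ is taken to be complete. The paper assumes this as well. *)

(* Defs.v *)
From Stdlib Require Import List Arith.
Import ListNotations.

(* A constraint theory: atomic constraints [atom] (the set C) over variables
   [nat], interpreted in the (intended model of the complete) theory CT with
   domain [dom].  [sat rho c] : the valuation rho satisfies the atom c. *)
Record CT := {
  atom : Type;
  dom : Type;
  dom_inhabited : inhabited dom;
  sat : (nat -> dom) -> atom -> Prop;
  avars : atom -> list nat;
  sat_vars : forall (rho rho' : nat -> dom) (c : atom),
      (forall x, In x (avars c) -> rho x = rho' x) -> (sat rho c <-> sat rho' c);
  ceq : nat -> nat -> atom;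
  ceq_sat : forall (rho : nat -> dom) x y, sat rho (ceq x y) <-> rho x = rho y;
  ceq_vars : forall x y, avars (ceq x y) = [x; y]
}.

Section Defs.
Variable T : CT.

Definition csat (rho : nat -> dom T) (E : list (atom T)) : Prop :=
  forall c, In c E -> sat T rho c.

Definition lvars (E : list (atom T)) : list nat := flat_map (avars T) E.

Definition consistent (E : list (atom T)) : Prop := exists rho, csat rho E.

Definition mutex (E E' : list (atom T)) : Prop :=
  forall rho, ~ (csat rho E /\ csat rho E').

(* value of  exists_{-V} (conjunction of E)  under rho: existentially
   quantify the free variables of E that are not in V *)
Definition exists_minus (V : nat -> Prop) (E : list (atom T)) (rho : nat -> dom T)
  : Prop :=
  exists rho', (forall x, ~ (In x (lvars E) /\ ~ V x) -> rho' x = rho x)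
               /\ csat rho' E.

Definition dsat (rho : nat -> dom T) (L : list (list (atom T))) : Prop :=
  exists E, In E L /\ csat rho E.

Definition closed_under_negation : Prop :=
  forall c : atom T, exists ds : list (atom T),
    (forall rho, ~ sat T rho c <-> exists d, In d ds /\ sat T rho d) /\
    (forall i j di dj, i <> j -> nth_error ds i = Some di ->
        nth_error ds j = Some dj -> mutex [di] [dj]).

Definition closed_under_existential_quantification : Prop :=
  forall (cs : list (atom T)) (V : nat -> Prop),
    exists L : list (list (atom T)),
      forall rho, exists_minus V cs rho <-> dsat rho L.

Definition constraint_split (C D : list (atom T)) (Es : list (list (atom T)))
  : Prop :=
  let V := fun x => In x (lvars C) /\ In x (lvars D) in
  (forall rho, (~ exists_minus V C rho /\ csat rho D) <-> dsat rho Es) /\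
  (forall i Ei, nth_error Es i = Some Ei -> consistent Ei) /\
  (forall i j Ei Ej, i <> j -> nth_error Es i = Some Ei ->
      nth_error Es j = Some Ej -> mutex Ei Ej).

End Defs.

(* Main.v *)
Require Import Defs.
From Stdlib Require Import List.
From Stdlib Require Import Classical.
Import ListNotations.

Section S.
Variable T : CT.

Definition rep (P : (nat -> dom T) -> Prop) : Prop :=
  exists Es, (forall rho, P rho <-> dsat T rho Es) /\ Forall (consistent T) Es
             /\ ForallOrdPairs (mutex T) Es.

Lemma mutex_sym E F : mutex T E F -> mutex T F E.
Proof. unfold mutex; intros H rho [a b]; apply (H rho); auto. Qed.

Lemma rep_ext P Q : (forall rho, P rho <-> Q rho) -> rep P -> rep Q.
Proof.
  intros H [Es [H1 H2]]; exists Es; split; [|exact H2].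
  intro rho; rewrite <- H; apply H1.
Qed.

Lemma rep_false : rep (fun _ => False).
Proof.
  exists []; split; [|split; constructor].
  intro rho; split; [tauto|]. intros [E [HE _]]; inversion HE.
Qed.

Lemma rep_conj E : rep (fun rho => csat T rho E).
Proof.
  destruct (classic (consistent T E)) as [Hc|Hc].
  - exists [E]; split; [|split; [constructor; [exact Hc|constructor]|repeat constructor]].
    intro rho; split.
    + intro; exists E; simpl; auto.
    + intros [F [[<-|[]] H]]; auto.
  - exists []; split; [|split; constructor].
    intro rho; split.
    + intro H; exfalso; apply Hc; exists rho; auto.
    + intros [F [[] _]].
Qed.

Lemma FOP_app (Es Fs : list (list (atom T))) :
  ForallOrdPairs (mutex T) Es -> ForallOrdPairs (mutex T) Fs ->
  (forall E F, In E Es -> In F Fs -> mutex T E F) ->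
  ForallOrdPairs (mutex T) (Es ++ Fs).
Proof.
  induction Es as [|E Es IH]; simpl; intros H1 H2 H3; auto.
  inversion H1; subst. constructor.
  - apply Forall_app; split; auto.
    apply Forall_forall; intros; apply H3; simpl; auto.
  - apply IH; auto.
Qed.

Lemma rep_or P Q : rep P -> rep Q -> (forall rho, ~ (P rho /\ Q rho)) ->
  rep (fun rho => P rho \/ Q rho).
Proof.
  intros [Es [A1 [A2 A3]]] [Fs [B1 [B2 B3]]] Hd.
  exists (Es ++ Fs); split; [|split].
  - intro rho; rewrite A1, B1; unfold dsat; split.
    + intros [[E [HE HE2]]|[E [HE HE2]]]; exists E; rewrite in_app_iff; auto.
    + intros [E [HE HE2]]; rewrite in_app_iff in HE; destruct HE; [left|right]; eauto.
  - apply Forall_app; auto.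
  - apply FOP_app; auto.
    intros E F HE HF rho [h1 h2]. apply (Hd rho); split.
    + apply A1; exists E; auto.
    + apply B1; exists F; auto.
Qed.

Lemma rep_dsat_and R : (forall F, rep (fun rho => R rho /\ csat T rho F)) ->
  forall Fs, ForallOrdPairs (mutex T) Fs -> rep (fun rho => R rho /\ dsat T rho Fs).
Proof.
  intros HR Fs; induction Fs as [|F Fs IH]; intro Hm.
  - eapply rep_ext; [|apply rep_false].
    intro rho; split; [tauto|]. intros [_ [E [[] _]]].
  - inversion Hm; subst.
    eapply rep_ext; [|apply (rep_or _ _ (HR F) (IH H2))].
    + intro rho; unfold dsat; simpl; split.
      * intros [[a b]|[a [E [HE b]]]]; split; eauto.
      * intros [a [E [[<-|HE] b]]]; [left|right]; eauto.
    + intros rho [[_ a] [_ [E [HE b]]]].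
      rewrite Forall_forall in H1. apply (H1 E HE rho); auto.
Qed.

Lemma rep_and P Q : rep P -> rep Q -> rep (fun rho => P rho /\ Q rho).
Proof.
  intros [Es [A1 [A2 A3]]] [Fs [B1 [B2 B3]]].
  eapply rep_ext with (P := fun rho => dsat T rho Fs /\ dsat T rho Es).
  { intro rho; rewrite A1, B1; tauto. }
  apply rep_dsat_and; auto.
  intro F.
  eapply rep_ext with (P := fun rho => csat T rho F /\ dsat T rho Fs).
  { intro rho; tauto. }
  apply rep_dsat_and; auto.
  intro G. eapply rep_ext; [|apply (rep_conj (F ++ G))].
  intro rho; unfold csat; split.
  - intro H; split; intros; apply H; rewrite in_app_iff; auto.
  - intros [a b] c Hc; rewrite in_app_iff in Hc; destruct Hc; auto.
Qed.

Lemma FOP_of_nth (R : list (atom T) -> list (atom T) -> Prop) l :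
  (forall i j a b, i <> j -> nth_error l i = Some a -> nth_error l j = Some b -> R a b) ->
  ForallOrdPairs R l.
Proof.
  induction l as [|a l IH]; intro H; constructor.
  - apply Forall_forall; intros b Hb.
    destruct (In_nth_error _ _ Hb) as [k Hk].
    apply (H 0 (S k)); auto.
  - apply IH; intros i j x y Hij Hi Hj. apply (H (S i) (S j)); auto.
Qed.

Lemma nth_of_FOP l : ForallOrdPairs (mutex T) l ->
  forall i j a b, i <> j -> nth_error l i = Some a -> nth_error l j = Some b -> mutex T a b.
Proof.
  induction 1 as [|x l Hf Hp IH]; intros i j a b Hij Hi Hj.
  - destruct i; discriminate.
  - rewrite Forall_forall in Hf.
    destruct i as [|i], j as [|j]; simpl in *.
    + congruence.
    + injection Hi as <-. apply Hf. eapply nth_error_In; eauto.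
    + injection Hj as <-. apply mutex_sym, Hf. eapply nth_error_In; eauto.
    + apply (IH i j); [congruence|assumption|assumption].
Qed.

Lemma rep_dsat L : ForallOrdPairs (mutex T) L -> rep (fun rho => dsat T rho L).
Proof.
  intro H. eapply rep_ext with (P := fun rho => True /\ dsat T rho L).
  { intro; tauto. }
  apply rep_dsat_and; auto.
  intro F; apply rep_ext with (P := fun rho => csat T rho F); [|apply rep_conj]. intro; split; [tauto|]. intros [_ h]; exact h.
Qed.

Hypothesis Hneg : closed_under_negation T.

Lemma rep_neg_atom c : rep (fun rho => ~ sat T rho c).
Proof.
  destruct (Hneg c) as [ds [H1 H2]].
  eapply rep_ext; [|apply (rep_dsat (map (fun d => [d]) ds))].
  - intro rho; rewrite H1; unfold dsat, csat; split.
    + intros [E [HE HE2]]. apply in_map_iff in HE as [d [<- Hd]].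
      exists d; split; auto. apply HE2; simpl; auto.
    + intros [d [Hd Hs]]; exists [d]; split.
      * apply in_map_iff; eauto.
      * intros c' [<-|[]]; auto.
  - apply FOP_of_nth; intros i j a b Hij Hi Hj.
    rewrite nth_error_map in Hi, Hj.
    destruct (nth_error ds i) eqn:Ei; try discriminate.
    destruct (nth_error ds j) eqn:Ej; try discriminate.
    simpl in *; injection Hi as <-; injection Hj as <-.
    eapply H2; eauto.
Qed.

Lemma rep_neg_conj E : rep (fun rho => ~ csat T rho E).
Proof.
  induction E as [|c E IH].
  - eapply rep_ext; [|apply rep_false]. intro rho; unfold csat; simpl; split; [tauto|].
    intro H; apply H; intros _ [].
  - eapply rep_ext; [|apply (rep_or _ _ (rep_neg_atom c) (rep_and _ _ (rep_conj [c]) IH))].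
    + intro rho; unfold csat; simpl; split.
      * intros [h|[h1 h2]] H.
        -- apply h, H; auto.
        -- apply h2; intros; apply H; auto.
      * intro H. destruct (classic (sat T rho c)) as [h|h]; [right|left; auto].
        split; [intros c' [<-|[]]; auto|].
        intro H'; apply H; intros c' [<-|Hc']; auto.
    + intros rho [a [b _]]. apply a, b; simpl; auto.
Qed.

Lemma rep_neg_dsat L : rep (fun rho => ~ dsat T rho L).
Proof.
  induction L as [|E L IH].
  - eapply rep_ext; [|apply (rep_conj [])].
    intro rho; unfold csat, dsat; simpl; split.
    + intros _ [E [[] _]].
    + intros _ c [].
  - eapply rep_ext; [|apply (rep_and _ _ (rep_neg_conj E) IH)].
    intro rho; unfold dsat; simpl; split.
    + intros [a b] [F [[<-|HF] c]]; [apply a; exact c| apply b; exists F; auto].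
    + intros H; split.
      * intro; apply H; eauto.
      * intros [F [HF c]]; apply H; eauto.
Qed.

End S.

Theorem proposition7p14 (T : CT) :
  closed_under_negation T ->
  closed_under_existential_quantification T ->
  forall C D : list (atom T), consistent T (C ++ D) ->
    exists Es : list (list (atom T)), constraint_split T C D Es.
Proof.
  intros Hn He C D _.
  set (V := fun x => In x (lvars T C) /\ In x (lvars T D)).
  destruct (He C V) as [L HL].
  assert (R : rep T (fun rho => ~ exists_minus T V C rho /\ csat T rho D)).
  { eapply rep_ext; [|apply (rep_and _ _ _ (rep_neg_dsat T Hn L) (rep_conj T D))].
    intro rho; rewrite HL; tauto. }
  destruct R as [Es [R1 [R2 R3]]].
  exists Es; unfold constraint_split; split; [|split].
  - exact R1.
  - intros i Ei Hi. rewrite Forall_forall in R2; apply R2; eapply nth_error_In; eauto.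
  - apply nth_of_FOP; auto.
Qed.
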